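(* Let $\gamma\in(0,1)$, and let $\hat c^1,\hat c^2,\dots$ be independent, identically distributed real random variables with mean $c$ and variance $\sigma^2<\infty$. Let $\alpha_0,\alpha_1,\dots$ be deterministic real numbers. Define $\bar v^0=0$ and, for $n\ge1$, $$\hat v^n=\hat c^n+\gamma\bar v^{n-1},\qquad \bar v^n=(1-\alpha_{n-1})\bar v^{n-1}+\alpha_{n-1}\hat v^n.$$ Define $\delta^1=\alpha_0$, $\lambda^1=\alpha_0^2$ and, for $n>1$, $$\delta^n=\alpha_{n-1}+\big(1-(1-\gamma)\alpha_{n-1}\big)\delta^{n-1},\qquad \lambda^n=\alpha_{n-1}^2+\big(1-(1-\gamma)\alpha_{n-1}\big)^2\lambda^{n-1}.$$ Then for all $n\ge1$, $\mathbb{E}(\bar v^n)=\delta^n c$ and $\mathrm{Var}(\bar v^n)=\lambda^n\sigma^2$. *)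

(* Defs.v *)
From HB Require Import structures.
From mathcomp Require Import all_boot all_order all_algebra.
From mathcomp Require Import all_classical all_reals all_analysis.
Set Implicit Arguments. Unset Strict Implicit. Unset Printing Implicit Defensive.
Import Order.TTheory GRing.Theory Num.Theory.
Local Open Scope classical_set_scope.
Local Open Scope ring_scope.

Definition mutually_independent d (T : measurableType d) (R : realType)
  (P : probability T R) (I : set nat) (X : nat -> T -> R) : Prop :=
  forall (s : seq nat) (B : nat -> set R),
    uniq s -> (forall i, i \in s -> I i) ->
    (forall i, i \in s -> measurable (B i)) ->
    P (\bigcap_(i in [set i | i \in s]) (X i @^-1` B i)) =
    (\big[*%E/1%E]_(i <- s) P (X i @^-1` B i))%E.

Definition identically_distributed d (T : measurableType d) (R : realType)
  (P : probability T R) (I : set nat) (X : nat -> {RV P >-> R}) : Prop :=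
  forall i j, I i -> I j -> distribution P (X i) = distribution P (X j).

Section iterates.
Variables (d : measure_display) (T : measurableType d) (R : realType).
Variables (gamma : R) (alpha : nat -> R) (chat : nat -> T -> R).

Fixpoint vbar (n : nat) : T -> R :=
  match n with
  | 0 => fun _ => 0
  | m.+1 => fun w =>
      (1 - alpha m) * vbar m w + alpha m * (chat m.+1 w + gamma * vbar m w)
  end.

Definition vhat (n : nat) : T -> R :=
  fun w => chat n w + gamma * vbar n.-1 w.

(* delta^1 = alpha_0, delta^n = alpha_{n-1} + (1-(1-gamma)alpha_{n-1}) delta^{n-1};
   the value at 0 is irrelevant (set to 0). *)
Fixpoint delta (n : nat) : R :=
  match n with
  | 0 => 0
  | m.+1 => match m with
            | 0 => alpha 0
            | _ => alpha m + (1 - (1 - gamma) * alpha m) * delta m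
            end
  end.

Fixpoint lambda (n : nat) : R :=
  match n with
  | 0 => 0
  | m.+1 => match m with
            | 0 => alpha 0 ^+ 2
            | _ => alpha m ^+ 2 + (1 - (1 - gamma) * alpha m) ^+ 2 * lambda m
            end
  end.

End iterates.

Arguments mutually_independent {d T R} P I X.
Arguments identically_distributed {d T R} P I X.

(* Main.v *)
Require Import Defs.
From HB Require Import structures.
From mathcomp Require Import all_boot all_order all_algebra.
From mathcomp Require Import all_classical all_reals all_analysis.
From mathcomp Require Import measurable_realfun ring.
Import Order.TTheory GRing.Theory Num.Theory.
Local Open Scope classical_set_scope.
Local Open Scope ring_scope.

Section S.
Local Open Scope ereal_scope.
Context d (T : measurableType d) (R : realType) (P : probability T R).
Variables (X Y : {mfun T >-> R}).
Hypothesis indep : forall A B, measurable A -> measurable B ->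
  P (X @^-1` A `&` Y @^-1` B) = P (X @^-1` A) * P (Y @^-1` B).
Hypotheses (X1 : (X : T -> R) \in Lfun P 1) (Y1 : (Y : T -> R) \in Lfun P 1)
  (XY1 : (X \* Y)%R \in Lfun P 1).

Let Z (w : T) : (R * R)%type := (X w, Y w).
Let mZ : measurable_fun setT Z.
Proof. by apply: measurable_fun_pair. Qed.
Let Zm : {mfun T >-> (R * R)%type} := HB.pack Z (isMeasurableFun.Build _ _ _ _ Z mZ).
Let mu := distribution P X.
Let nu := distribution P Y.
Let f (z : (R * R)%type) : \bar R := (z.1 * z.2)%:E.

Let eqm : forall A, measurable A -> (mu \x nu) A = distribution P Zm A.
Proof.
apply: product_measure_unique => A B mA mB.
rewrite /distribution /pushforward /mu /nu /distribution /pushforward.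
by rewrite -indep.
Qed.

Let mf : measurable_fun [set: (R * R)%type] f.
Proof.
apply/measurable_EFinP; apply: measurable_funM.
  exact: measurable_fst.
exact: measurable_snd.
Qed.

Let idint (V : {mfun T >-> R}) : (V : T -> R) \in Lfun P 1 ->
  (distribution P V).-integrable setT (EFin \o (@id R)).
Proof.
move=> /Lfun1_integrable iV.
apply: integrable_pushforward => //; exact/measurable_EFinP.
Qed.

Let intdist (V : {mfun T >-> R}) : (V : T -> R) \in Lfun P 1 ->
  \int[distribution P V]_y (y%:E) = 'E_P[V].
Proof.
move=> /Lfun1_integrable iV.
rewrite unlock (@integral_distribution _ _ _ _ _ P V (EFin \o id)) //.
exact/measurable_EFinP.
Qed.

Lemma indep_expectationM : 'E_P[X \* Y] = 'E_P[X] * 'E_P[Y].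
Proof.
have iZ : P.-integrable (Zm @^-1` setT) (f \o Zm).
  by rewrite preimage_setT; move/Lfun1_integrable: XY1.
have ipf : (distribution P Zm).-integrable setT f.
  exact: integrable_pushforward.
have ip : (mu \x nu).-integrable setT f.
  apply/integrableP; split => //.
  rewrite (eq_measure_integral (distribution P Zm)); last first.
    by move=> A mA _; exact: eqm.
  by case/integrableP: ipf.
have -> : 'E_P[X \* Y] = \int[mu \x nu]_z f z.
  rewrite (eq_measure_integral (distribution P Zm)); last first.
    by move=> A mA _; exact: eqm.
  by rewrite (@integral_distribution _ _ _ _ _ P Zm f) // unlock.
rewrite -integral12_prod_meas1 //.
rewrite /fubini_F.
have EYf : 'E_P[Y] = (fine 'E_P[Y])%:E by rewrite fineK // expectation_fin_num.
transitivity (\int[mu]_x ((x%:E) * 'E_P[Y])).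
  apply: eq_integral => x _.
  rewrite /f /= -intdist //.
  under eq_integral do rewrite EFinM.
  by rewrite integralZl //; exact: idint.
rewrite EYf integralZr //; last exact: idint.
by rewrite intdist.
Qed.
End S.


Lemma deltaS (R : realType) (gamma : R) (alpha : nat -> R) m :
  delta gamma alpha m.+1 = alpha m + (1 - (1 - gamma) * alpha m) * delta gamma alpha m.
Proof. by case: m => [|m] //=; rewrite mulr0 addr0. Qed.

Lemma lambdaS (R : realType) (gamma : R) (alpha : nat -> R) m :
  lambda gamma alpha m.+1 = alpha m ^+ 2 + (1 - (1 - gamma) * alpha m) ^+ 2 * lambda gamma alpha m.
Proof. by case: m => [|m] //=; rewrite mulr0 addr0. Qed.

Theorem proposition1 (d : measure_display) (T : measurableType d) (R : realType)
  (P : probability T R) (gamma : R) (chat : nat -> {RV P >-> R})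
  (c sigma : R) (alpha : nat -> R) :
  0 < gamma < 1 ->
  mutually_independent P [set n | (0 < n)%N] (fun n => chat n : T -> R) ->
  identically_distributed P [set n | (0 < n)%N] chat ->
  (forall n, (0 < n)%N -> (chat n : T -> R) \in Lfun P 2%:E) ->
  (forall n, (0 < n)%N -> ('E_P[chat n] = c%:E)%E) ->
  (forall n, (0 < n)%N -> variance P (chat n) = (sigma ^+ 2)%:E) ->
  forall n, (0 < n)%N ->
    ('E_P[vbar gamma alpha (fun k => chat k : T -> R) n]
      = (delta gamma alpha n * c)%:E)%E /\
    variance P (vbar gamma alpha (fun k => chat k : T -> R) n)
      = (lambda gamma alpha n * sigma ^+ 2)%:E.
Proof.
move=> _ indep _ L2 Ec Vc.
set V := vbar gamma alpha _.
pose a m := 1 - (1 - gamma) * alpha m.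
have Pfin : P setT \is a fin_num := fin_num_measure P _ measurableT.
have VS m : V m.+1 = (a m \o* V m \+ alpha m \o* (chat m.+1 : T -> R))%R.
  by apply/funext => w /=; rewrite /a; ring.
have V2 m : V m \in Lfun P 2%:E.
  elim: m => [|m IH]; first by change (V 0) with (cst 0 : T -> R); exact: Lfun_cst.
  rewrite VS; apply: rpredD; first by rewrite lee1n.
    by move=> h; apply: Lfun_scale => //; rewrite lee1n.
  by move=> h; apply: Lfun_scale; [rewrite ler1n | exact: L2].
have V1 m : V m \in Lfun P 1 by exact: Lfun_subset12.
have X1 k : (0 < k)%N -> (chat k : T -> R) \in Lfun P 1.
  by move=> k0; apply: Lfun_subset12 => //; exact: L2.
have EV m : ('E_P[V m] = (delta gamma alpha m * c)%:E)%E.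
  elim: m => [|m IH]; first by rewrite mul0r; change (V 0) with (cst 0 : T -> R); exact: expectation_cst.
  rewrite VS expectationD ?Lfun_scale ?X1 // ?lee1n //.
  rewrite !expectationZl ?X1 // IH Ec // deltaS -!EFinM -EFinD; congr (_%:E).
  by rewrite /a; ring.
have cov0 j k : (0 < j)%N -> (0 < k)%N -> j != k ->
    covariance P (chat j) (chat k) = 0%E.
  move=> j0 k0 jk.
  have ind : forall A B, measurable A -> measurable B ->
      P (chat j @^-1` A `&` chat k @^-1` B) =
      (P (chat j @^-1` A) * P (chat k @^-1` B))%E.
    move=> A B mA mB.
    have kj : (k == j) = false by rewrite eq_sym; exact/negbTE.
    have := indep [:: j; k] (fun i => if i == j then A else B).
    rewrite /= !big_cons big_nil eqxx kj mule1 => <- //.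
    - congr (P _); apply/seteqP; split => [w [HA HB] i /=|w H].
        by rewrite !inE => /orP[] /eqP ->; rewrite ?eqxx ?kj.
      rewrite /setI /=; split.
        by have := H j; rewrite /= eqxx; apply; rewrite mem_head.
      by have := H k; rewrite /= kj; apply; rewrite !inE eqxx orbT.
    - by rewrite andbT mem_seq1.
    - by move=> i; rewrite !inE => /orP[] /eqP ->.
    - by move=> i _; case: (i == j).
  have XY1 : ((chat j : T -> R) \* chat k)%R \in Lfun P 1.
    by apply: Lfun2_mul_Lfun1; exact: L2.
  rewrite covarianceE ?X1 //.
  rewrite (@indep_expectationM _ _ _ P (chat j) (chat k) ind (X1 j j0) (X1 k k0) XY1) ?X1 // subee //.
  by rewrite fin_numM // expectation_fin_num // X1.
have covV m k : (m < k)%N -> covariance P (V m) (chat k) = 0%E.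
  elim: m => [|m IH] mk.
    by change (V 0) with (cst 0 : T -> R); exact: covariance_cst_l.
  have k0 : (0 < k)%N by apply: leq_trans mk.
  rewrite VS covarianceDl; last 3 first.
  - by apply: Lfun_scale; [rewrite ler1n|exact: V2].
  - by apply: Lfun_scale; [rewrite ler1n|exact: L2].
  - exact: L2.
  rewrite covarianceZl ?X1 ?V1 //; last by apply: Lfun2_mul_Lfun1 => //; exact: L2.
  rewrite covarianceZl ?X1 //; last by apply: Lfun2_mul_Lfun1 => //; apply: L2.
  by rewrite IH ?(ltnW mk) // cov0 // ?(ltn_eqF mk) // !mule0 adde0.
move=> n _; split; first exact: EV.
elim: n => [|m IH]; first by rewrite mul0r; change (V 0) with (cst 0 : T -> R); exact: variance_cst.
rewrite VS varianceD; last 2 first.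
  - by apply: Lfun_scale; [rewrite ler1n|exact: V2].
  - by apply: Lfun_scale; [rewrite ler1n|exact: L2].
rewrite !varianceZ ?L2 // IH Vc //.
rewrite covarianceZl ?V1 //; last 2 first.
  - by apply: Lfun_scale; [exact: lexx|apply: X1].
  - by apply: Lfun2_mul_Lfun1 => //; apply: Lfun_scale; [rewrite ler1n|apply: L2].
rewrite covarianceZr ?X1 ?V1 //; last by apply: Lfun2_mul_Lfun1 => //; exact: L2.
rewrite covV // !mule0 adde0 -!EFinM -EFinD lambdaS; congr (_%:E).
by rewrite /a; ring.
Qed.
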